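(* Let $R$ be a $*$-reducing ring and let $p,q\in R$ be projections. Then the following are equivalent: (1) $pq+qp$ is MP invertible; (2) $p+q$ and $pq$ are both MP invertible.
   Context: $R$ is an associative ring with identity $1$ and an involution $a\mapsto a^*$ (satisfying $(a^* )^*=a$, $(a+b)^*=a^*+b^*$, $(ab)^*=b^*a^*$). $R$ is $*$-reducing if $a^*a=0$ implies $a=0$ for all $a\in R$. An element $a$ is MP invertible if there is $b$ with $aba=a$, $bab=b$, $(ab)^*=ab$, $(ba)^*=ba$. A projection is an element $p$ with $p^2=p=p^*$. *)

(* Defs.v *)
From mathcomp Require Import all_boot all_algebra.
Set Implicit Arguments. Unset Strict Implicit. Unset Printing Implicit Defensive.
Import GRing.Theory.
Local Open Scope ring_scope.

Definition is_involution (R : pzRingType) (star : R -> R) : Prop :=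
  [/\ forall a, star (star a) = a,
      forall a b, star (a + b) = star a + star b &
      forall a b, star (a * b) = star b * star a].

Definition star_reducing (R : pzRingType) (star : R -> R) : Prop :=
  forall a : R, star a * a = 0 -> a = 0.

Definition MP_invertible (R : pzRingType) (star : R -> R) (a : R) : Prop :=
  exists b : R, [/\ a * b * a = a, b * a * b = b,
                    star (a * b) = a * b & star (b * a) = b * a].

Definition is_projection (R : pzRingType) (star : R -> R) (p : R) : Prop :=
  p * p = p /\ star p = p.

(* Main.v *)
Require Import Defs.
From mathcomp Require Import all_boot all_algebra.
Import GRing.Theory.
Set Implicit Arguments. Unset Strict Implicit.
Local Open Scope ring_scope.

Section S.
Variable R : pzRingType.
Variable star : R -> R.
Hypothesis Hinv : is_involution star.

Lemma sK a : star (star a) = a. Proof. by case: Hinv. Qed.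
Lemma sD a b : star (a + b) = star a + star b. Proof. by case: Hinv. Qed.
Lemma sM a b : star (a * b) = star b * star a. Proof. by case: Hinv. Qed.
Lemma s0 : star 0 = 0.
Proof. have h := sD 0 0; rewrite addr0 in h. by apply: (addrI (star 0)); rewrite addr0 -h. Qed.
Lemma sN a : star (- a) = - star a.
Proof. by apply/eqP; rewrite -addr_eq0 -sD addNr s0. Qed.
Lemma sB a b : star (a - b) = star a - star b.
Proof. by rewrite sD sN. Qed.
Lemma s1 : star 1 = 1.
Proof. have := sM (star 1) 1. rewrite !sK mulr1 sK => h. exact: esym h. Qed.

Lemma sa_inv h x : star h = h -> h = h * h * x ->
  let g := star x * h * x in
  [/\ star g = g, h * g = g * h, h * g * h = h, g * h * g = g & star (h * g) = h * g].
Proof.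
move=> sh hx g.
have h2 : h = star x * h * h by rewrite -{1}sh {1}hx !sM sh mulrA.
have e1 : star x * h = h * x by rewrite {1}hx !mulrA; congr (_ * x); exact: esym h2.
have hxh : h * x * h = h by rewrite -e1; exact: esym h2.
have hg : h * g = h * x by rewrite /g !mulrA -(mulrA h) e1 mulrA -hx.
have gh : g * h = h * x by rewrite /g -(mulrA (star x) h x) -(mulrA (star x) (h*x) h) hxh e1.
split.
- by rewrite /g !sM sK sh mulrA.
- by rewrite hg gh.
- by rewrite hg hxh.
- have gg : g = h * x * x by rewrite /g e1.
  by rewrite gh gg !mulrA hxh.
- by rewrite hg sM sh e1.
Qed.

Lemma sa_MP h x : star h = h -> h = h * h * x -> MP_invertible star h.
Proof.
move=> sh hx; have [_ e1 e2 e3 e4] := sa_inv sh hx.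
exists (star x * h * x); split => //; by rewrite -e1.
Qed.

Lemma MP_sa h : star h = h -> MP_invertible star h -> exists x, h = h * h * x.
Proof.
move=> sh [b [h1 h2 h3 h4]]; exists (star b).
by rewrite -{1}h1 -mulrA -h4 sM sh mulrA.
Qed.

Lemma comm_inv h x : star h = h -> h = h * h * x ->
  exists g, [/\ star g = g, h * g = g * h, h * g * h = h & g * h * g = g].
Proof.
move=> sh hx; have [e0 e1 e2 e3 _] := sa_inv sh hx.
by exists (star x * h * x).
Qed.

Lemma glue0 (V : zmodType) (a b : V) : a - (a - b) = b.
Proof. by rewrite opprB addrC subrK. Qed.

Lemma part1f (u y : R) : u * (u - 1) = u * (u - 1) * (u * (u - 1)) * y ->
  (exists y1, u = u * u * y1) /\ (exists y2, u - 1 = (u - 1) * (u - 1) * y2).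
Proof.
set v := u - 1 => H.
have cm : u * v = v * u by rewrite /v mulrBr mulrBl mulr1 mul1r.
have uv1 : u - v = 1 by rewrite /v glue0.
have e : u * v * (u * v) = u * u * (v * v).
  by rewrite !mulrA -(mulrA u v u) -cm !mulrA.
have e' : u * v * (u * v) = v * v * (u * u).
  by rewrite cm !mulrA -(mulrA v u v) cm !mulrA.
split.
- exists (1 - v * v * y).
  rewrite mulrBr mulr1 !mulrA -(mulrA (u * u) v v) -e -H -mulrBr uv1 mulr1 //.
- exists (u * u * y - 1).
  rewrite mulrBr mulr1 !mulrA -(mulrA (v * v) u u) -e' -H cm -mulrBr uv1 mulr1 //.
Qed.

Lemma part1b (u g1 g2 : R) :
  u * g1 = g1 * u -> u * g1 * u = u -> (u - 1) * g2 = g2 * (u - 1) ->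
  (u - 1) * g2 * (u - 1) = u - 1 ->
  u * (u - 1) = u * (u - 1) * (u * (u - 1)) * (g1 * g2).
Proof.
set v := u - 1 => c1 i1 c2 i2.
have cm : u * v = v * u by rewrite /v mulrBr mulrBl mulr1 mul1r.
have c1v : v * g1 = g1 * v by rewrite /v mulrBr mulrBl mulr1 mul1r c1.
have uug : u * u * g1 = u by rewrite -mulrA c1 mulrA i1.
have vvg : v * v * g2 = v by rewrite -mulrA c2 mulrA i2.
have E : u * v * (u * v) = u * u * (v * v) by rewrite !mulrA -(mulrA u v u) -cm !mulrA.
have vg : v * v * g1 = g1 * (v * v) by rewrite -mulrA c1v !mulrA c1v.
rewrite E !mulrA -(mulrA (u*u) v v) -(mulrA (u*u) (v*v) g1) vg.
rewrite !mulrA uug -(mulrA u v v) -(mulrA u (v*v) g2) vvg //.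
Qed.

Lemma DC (h G z : R) : h * G = G * h -> G * h * G = G -> h * G * h = h -> z * h = h * z ->
  z * G = G * z.
Proof.
move=> c i1 i2 zh.
set e := h * G.
have G1 : G = G * G * h by rewrite -{1}i1 -mulrA c mulrA.
have G2 : G = h * G * G by rewrite -{1}i1 -c.
have H1 : h = h * h * G by rewrite -{1}i2 -mulrA -c mulrA.
have H2 : h = G * h * h by rewrite -{1}i2 c.
have zhh : z * (h * h) = h * h * z by rewrite mulrA zh -mulrA zh mulrA.
have eG : e * G = G by rewrite /e -G2.
have A : G * z = e * z * G.
  have ee : G * G * h * h = e by rewrite /e -(mulrA G G h) -c mulrA i1 -c.
  rewrite -ee {1}G1 -mulrA -zh.
  by rewrite {1}H1 (mulrA z (h*h) G) zhh !mulrA.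
have B : z * G = G * z * e.
  have ee : h * h * G * G = e by rewrite /e -(mulrA h h G) c mulrA i2.
  rewrite -{1}i1 -c !mulrA zh {1}H2 -(mulrA (G*h) h z) -zh mulrA.
  by rewrite -(mulrA G h z) -zh mulrA /e {5}G2 !mulrA.
have C : G * z = e * (z * G) by rewrite A mulrA.
by rewrite C B !mulrA eG.
Qed.

Lemma glue2 (V : zmodType) (a x y z : V) : a + (x + y - z) - x - y = a - z.
Proof. by rewrite !addrA (addrAC _ (-z) (-x)) (addrAC _ y (-x)) addrK (addrAC _ (-z) (-y)) addrK. Qed.
Lemma glue3 (V : zmodType) (x y z : V) : x + y - (x + y - z) = z.
Proof. by rewrite opprB addrC subrK. Qed.

Lemma glue1 (V : zmodType) (a b c : V) : a + b - a = b.
Proof. by rewrite addrC addKr. Qed.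

Section P.
Variables p q : R.
Hypotheses (pp : p * p = p) (sp : star p = p) (qq : q * q = q) (sq : star q = q).
Let c := p + q - 1.

Lemma cp : c * p = q * p.
Proof. by rewrite /c mulrBl mulrDl pp mul1r glue1. Qed.
Lemma pc : p * c = p * q.
Proof. by rewrite /c mulrBr mulrDr pp mulr1 glue1. Qed.
Lemma cq : c * q = p * q.
Proof. by rewrite /c mulrBl mulrDl qq mul1r addrK. Qed.
Lemma qc : q * c = q * p.
Proof. by rewrite /c mulrBr mulrDr qq mulr1 addrK. Qed.
Lemma sc : star c = c.
Proof. by rewrite /c sB sD sp sq s1. Qed.
Lemma cc : c * c = q * p + p * q - c.
Proof. by rewrite {2}/c mulrBr mulrDr cp cq mulr1. Qed.

Lemma part2 : MP_invertible star (p * q) -> exists y, c = c * c * y.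
Proof.
move=> [b [H1 H2 H3 H4]].
have F2 : b = b * star b * q * p by rewrite -{1}H2 -mulrA -H3 !sM sp sq !mulrA.
have bp : b * p = b by rewrite {1}F2 -mulrA pp -F2.
have F1 : b = q * p * star b * b by rewrite -{1}H2 -H4 !sM sp sq.
have qb : q * b = b by rewrite {1}F1 !mulrA qq -F1.
have xb : p * q * b = p * b by rewrite -mulrA qb.
have bx : b * (p * q) = b * q by rewrite mulrA bp.
have pbq : p * b * q = p * q.
  by move: H1; rewrite xb mulrA -(mulrA p b p) bp.
have spb : star (p * b) = p * b by rewrite -xb.
have sbq : star (b * q) = b * q by rewrite -bx.
have pbs : star b * p = p * b by rewrite -spb sM sp.
have qbs : q * star b = b * q by rewrite -sbq sM sq.
have F3 : q * p * b = q * p.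
  apply: (can_inj sK).
  by rewrite !sM sp sq mulrA pbs pbq.
have qbp : q * star b * p = q * p.
  apply: (can_inj sK); by rewrite !sM sK sp sq mulrA pbq.
have F4 : p * q * star b = p * q.
  apply: (can_inj sK).
  by rewrite !sM sK sp sq mulrA -qbs qbp.
have pbs' : p * star b = star b by rewrite -{2}bp sM sp.
have cb : c * b = p * b by rewrite /c mulrBl mulrDl qb mul1r addrK.
have cbs : c * star b = q * star b by rewrite /c mulrBl mulrDl pbs' mul1r glue1.
exists (b + star b + c - p * b - b * q).
have cy : c * (b + star b + c - p * b - b * q) = p * b + q * star b - c.
  rewrite !mulrBr !mulrDr cb cbs (mulrA c p b) cp F3 (mulrA c b q) cb pbq.
  by rewrite cq mulrN1 glue2.
rewrite -mulrA cy mulrBr cc mulrDr (mulrA c p b) cp F3 (mulrA c q) cq F4 glue3 //.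
Qed.

Lemma comm4a (a b : R) : a * b = b * a -> a * a * (b * b) = a * b * (a * b).
Proof. by move=> ab; rewrite !mulrA -(mulrA a a b) -(mulrA a b a) -ab. Qed.

Lemma comm4 (a b : R) : a * b = b * a ->
  a * a * (b * b) = a * b * (a * b) /\ a * b * (a * b) = b * b * (a * a).
Proof.
move=> ab; split; first exact: comm4a.
by rewrite (comm4a (esym ab)) ab.
Qed.

Lemma part3 y : c = c * c * y -> MP_invertible star (p * q).
Proof.
move=> H; have [g [gs cg cgc gcg]] := comm_inv sc H.
have G1 : g = c * g * g by rewrite -{1}gcg -cg.
have pc2 : p * (c * c) = c * c * p.
  by rewrite mulrA pc -mulrA qc -(mulrA c c p) cp !mulrA cq.
have qc2 : q * (c * c) = c * c * q.
  by rewrite mulrA qc -mulrA pc -(mulrA c c q) cq !mulrA cp.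
have [E1 E2] := comm4 cg.
have ee : c * g * (c * g) = c * g by rewrite mulrA cgc.
have hG : c * c * (g * g) = g * g * (c * c) by rewrite E1 E2.
have GhG : g * g * (c * c) * (g * g) = g * g.
  by rewrite -E2 ee !mulrA -G1.
have hGh : c * c * (g * g) * (c * c) = c * c.
  by rewrite E1 ee !mulrA cgc.
have pG := DC hG GhG hGh pc2.
have qG := DC hG GhG hGh qc2.
have qg : q * g = g * p.
  rewrite {1}G1 !mulrA qc -cp -(mulrA (c*p) g g) -(mulrA c p) pG !mulrA -G1 //.
have eE : c * g = c * c * (g * g) by rewrite {1}G1 !mulrA.
have pe : p * (c * g) = c * g * p.
  by rewrite eE mulrA pc2 -mulrA pG mulrA.
have qe : q * (c * g) = c * g * q.
  by rewrite eE mulrA qc2 -mulrA qG mulrA.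
have xb : p * q * (q * g) = p * (c * g).
  by rewrite mulrA -(mulrA p q q) qq -pc -mulrA.
have bx : q * g * (p * q) = c * g * q.
  by rewrite qg mulrA -(mulrA g p p) pp -mulrA -cq mulrA -cg.
have se : star (c * g) = c * g by rewrite sM gs sc cg.
exists (q * g); split.
- by rewrite xb pe -(mulrA (c*g) p (p*q)) (mulrA p p q) pp -cq mulrA cgc.
- rewrite bx mulrA -(mulrA (c*g) q q) qq -(mulrA (c*g) q g) qg mulrA -G1 //.
- by rewrite xb sM se sp pe.
- by rewrite bx sM se sq qe.
Qed.

End P.
End S.

Lemma glue4 (V : zmodType) (a x y b : V) : a + x + (y + b) - (a + b) = y + x.
Proof. by rewrite (addrC y b) addrACA (addrC (a + b)) addrK addrC. Qed.

Theorem theorem2p14 (R : pzRingType) (star : R -> R)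
    (Hinv : is_involution star) (Hred : star_reducing star)
    (p q : R) (Hp : is_projection star p) (Hq : is_projection star q) :
  MP_invertible star (p * q + q * p) <->
  (MP_invertible star (p + q) /\ MP_invertible star (p * q)).
Proof.
case: Hp => pp sp; case: Hq => qq sq.
have aE : p * q + q * p = (p + q) * (p + q - 1).
  by rewrite mulrBr mulr1 mulrDr !mulrDl pp qq glue4.
have sa : star (p * q + q * p) = p * q + q * p.
  by rewrite (sD Hinv) !(sM Hinv) sp sq addrC.
have ss : star (p + q) = p + q by rewrite (sD Hinv) sp sq.
have sc' := sc Hinv sp sq.
split.
- move=> Ha; have [y Hy] := MP_sa Hinv sa Ha.
  rewrite aE in Hy; have [[y1 H1] [y2 H2]] := part1f Hy.
  split; first by apply: (sa_MP Hinv ss); exact: H1.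
  by apply: (part3 Hinv pp sp qq sq); exact: H2.
- move=> [Hs Hx]; have [y1 H1] := MP_sa Hinv ss Hs.
  have [y2 H2] := part2 Hinv pp sp qq sq Hx.
  have [g1 [_ c1 i1 _]] := comm_inv Hinv ss H1.
  have [g2 [_ c2 i2 _]] := comm_inv Hinv sc' H2.
  have H := part1b c1 i1 c2 i2; rewrite -aE in H.
  by apply: (sa_MP Hinv sa); exact: H.
Qed.
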